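(* Let $G=(V,E)$ be a finite connected graph and $A$ an irreducible, lazy transition matrix on $V$, with $E_A=\{(i,j)\in V\times V:A(i,j)>0\}$. Suppose $x\in S^{(i)}$ and $v\in V$. Then there exist a finite integer $\sigma(i)$ and a sequence $(i_1=v,i_2,\dots,i_{\sigma(i)}=i)\in V^{\sigma(i)}$ with $(i_j,i_{j+1})\in E_A$ for all $j$, such that $$T_{i_{\sigma(i)}}\cdots T_{i_1}x\in S^{(i)}.$$
   Context: $S=(-\mathbb{N}_0)^V$ and $S^{(i)}=\{x\in S:x_i=0\}$. For $x\in S$ and $i\in V$, $T_ix\in S$ is obtained by first setting $x'_i=\max\{x_k:\operatorname{dist}(k,i)\le1\}+1$, $x'_j=x_j$ for $j\ne i$ (dist the graph distance in $G$), and then $(T_ix)_j=x'_j-\max_kx'_k$. Irreducible: for all $v\neq v'$ there is $s$ with $A^s(v,v')>0$; lazy: $A(v,v)>0$ for all $v$. *)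

(* Defs.v *)
From mathcomp Require Import all_boot all_order all_algebra.
Set Implicit Arguments. Unset Strict Implicit. Unset Printing Implicit Defensive.
Import Order.TTheory GRing.Theory Num.Theory.
Local Open Scope ring_scope.

Definition simple_graph (V : finType) (e : rel V) : Prop :=
  symmetric e /\ irreflexive e.

Definition graph_connected (V : finType) (e : rel V) : Prop :=
  forall u w : V, connect e u w.

Definition close (V : finType) (e : rel V) (k i : V) : bool := (k == i) || e k i.

Definition inS (V : finType) (x : V -> int) : Prop := forall j, x j <= 0.
Definition inSi (V : finType) (i : V) (x : V -> int) : Prop := inS x /\ x i = 0.

Definition Tpre (V : finType) (e : rel V) (i : V) (x : V -> int) : V -> int :=
  fun j => if j == i then (\big[Num.max/x i]_(k | close e k i) x k) + 1 else x j.

Definition Tmap (V : finType) (e : rel V) (i : V) (x : V -> int) : V -> int :=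
  let x' := Tpre e i x in
  fun j => x' j - \big[Num.max/x' i]_k x' k.

Fixpoint mpow (R : nzRingType) (V : finType) (A : V -> V -> R) (s : nat)
  : V -> V -> R :=
  match s with
  | 0 => fun u w => if u == w then 1 else 0
  | s'.+1 => fun u w => \sum_k mpow A s' u k * A k w
  end.

Definition transition_matrix (R : realFieldType) (V : finType) (A : V -> V -> R)
  : Prop := (forall u w, 0 <= A u w) /\ (forall u, \sum_w A u w = 1).

Definition irreducible (R : realFieldType) (V : finType) (A : V -> V -> R)
  : Prop := forall u w, u != w -> exists s, 0 < mpow A s u w.

Definition lazy_mx (R : realFieldType) (V : finType) (A : V -> V -> R) : Prop :=
  forall u, 0 < A u u.

Definition EA (R : realFieldType) (V : finType) (A : V -> V -> R) : rel V :=
  fun u w => 0 < A u w.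

(* T_{i_sigma} ... T_{i_1} x for the sequence v :: s *)
Definition Tseq (V : finType) (e : rel V) (v : V) (s : seq V) (x : V -> int)
  : V -> int := foldl (fun y k => Tmap e k y) (Tmap e v x) s.

(* Main.v *)
Require Import Defs.
From mathcomp Require Import all_boot all_order all_algebra.
From mathcomp Require Import zify.
Import Order.TTheory GRing.Theory Num.Theory.
Local Open Scope ring_scope.

Lemma Tmap_inS (V : finType) (e : rel V) (i : V) (y : V -> int) :
  inS (Tmap e i y).
Proof.
move=> j; rewrite /Tmap subr_le0.
exact: le_bigmax.
Qed.

Lemma Tmap_i (V : finType) (e : rel V) (i : V) (y : V -> int) :
  inS y -> Num.min 0 (y i + 1) <= Tmap e i y i.
Proof.
move=> Sy.
set m := \big[Num.max/y i]_(k | close e k i) y k.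
have ym : y i <= m by apply: le_bigmax_cond; rewrite /close eqxx.
have xi : Tpre e i y i = m + 1 by rewrite /Tpre eqxx.
have HM : \big[Num.max/Tpre e i y i]_k Tpre e i y k <= Num.max (m + 1) 0.
  apply/bigmax_leP; split; first by rewrite xi le_max lexx.
  move=> k _; rewrite /Tpre; case: eqP => _; first by rewrite le_max lexx.
  by rewrite le_max Sy orbT.
rewrite /Tmap.
move: HM; set M := \big[Num.max/_]_k _ => HM.
rewrite xi.
case: (leP 0 (m + 1)) => h.
- have : M <= m + 1 by move: HM; rewrite (max_idPl h).
  move=> h2; rewrite ge_min; apply/orP; left. lia.
- have : M <= 0 by move: HM; rewrite (max_idPr (ltW h)).
  move=> h2; rewrite ge_min; apply/orP; right; lia.
Qed.

Lemma iterT (V : finType) (e : rel V) (i : V) (k : nat) (y : V -> int) :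
  inS y -> 0 <= y i + k%:Z -> inSi i (iter k (Tmap e i) y).
Proof.
elim: k y => [|k IH] y Sy hk.
  split => //=; apply/eqP; rewrite eq_le Sy /=; lia.
rewrite iterSr; apply: IH; first exact: Tmap_inS.
have := @Tmap_i V e i y Sy; rewrite ge_min => /orP [h|h]; lia.
Qed.

Lemma foldl_nseq (V : finType) (e : rel V) (i : V) (N : nat) (y : V -> int) :
  foldl (fun y k => Tmap e k y) y (nseq N i) = iter N (Tmap e i) y.
Proof.
by elim: N y => [|N IH] y //=; rewrite IH -iterSr.
Qed.

Lemma mpow_conn (R : realFieldType) (V : finType) (A : V -> V -> R) :
  (forall u w, 0 <= A u w) ->
  forall s u w, ~~ connect (EA A) u w -> mpow A s u w = 0.
Proof.
move=> A0; elim=> [|s IH] u w nc /=.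
  case: eqP => // E; by rewrite E connect0 in nc.
apply: big1 => k _.
case ck: (connect (EA A) u k).
- have : ~~ EA A k w.
    apply: contra nc => ekw; apply: connect_trans ck _; exact: connect1.
  rewrite /EA -leNgt => h.
  have -> : A k w = 0 by apply/eqP; rewrite eq_le h A0.
  by rewrite mulr0.
- by rewrite IH ?ck // mul0r.
Qed.

Theorem mainTheorem9 (R : realFieldType) (V : finType) (e : rel V)
  (A : V -> V -> R) (i v : V) (x : V -> int) :
  simple_graph e -> graph_connected e ->
  transition_matrix A -> irreducible A -> lazy_mx A ->
  inSi i x ->
  exists s : seq V,
    [/\ path (EA A) v s, last v s = i & inSi i (Tseq e v s x)].
Proof.
move=> _ _ [A0 _] irr lz _.
have cvi : connect (EA A) v i.
  case: (eqVneq v i) => [->|nvi]; first exact: connect0.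
  have [s hs] := irr _ _ nvi.
  apply/negPn/negP => nc.
  by move: hs; rewrite (@mpow_conn R V A A0 s _ _ nc) ltxx.
case/connectP: cvi => p pp lp.
set y := Tseq e v p x.
have Sy : inS y.
  rewrite /y /Tseq; clear y pp lp; case/lastP: p => [|p' a];
  [exact: Tmap_inS | rewrite foldl_rcons; exact: Tmap_inS].
exists (p ++ nseq `|y i|%N i); split.
- rewrite cat_path pp -lp /=.
  elim: (`|y i|%N) => //= n ->; by rewrite /EA lz.
- by rewrite last_cat -lp; elim: (`|y i|%N).
- rewrite /Tseq foldl_cat -/(Tseq e v p x) -/y foldl_nseq.
  apply: iterT => //; rewrite abszE ler0_norm ?Sy // addrN; exact: lexx.
Qed.
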